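(* Let $A$ be an associative unital algebra over a field $k$ of characteristic zero and $\delta$ a locally nilpotent $k$-linear derivation of $A$ such that $\delta(x)=1$ for some $x\in A$. Then the following are equivalent: (a) $A^\delta$ is a left Ore domain; (b) $A$ is a left Ore domain; (c) $A$ is a critically compressible left $A[z;\delta]$-module.
   Context: $A^\delta=\ker\delta$. $\delta$ locally nilpotent means for every $a$ there is $n>0$ with $\delta^n(a)=0$. $A[z;\delta]$ is the differential operator ring ($A[z]$ as left $A$-module, $za=az+\delta(a)$), acting on $A$ by $(\sum_i a_iz^i)\cdot x=\sum_ia_i\delta^i(x)$. A left Ore domain is a domain $S$ with $Sa\cap Sb\neq0$ for nonzero $a,b$. A nonzero module is critically compressible if it embeds into each of its nonzero submodules and into none of its factor modules $M/N$ with $N\neq0$. *)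

(* Defs.v *)
From HB Require Import structures.
From mathcomp Require Import all_boot all_order all_algebra.
Set Implicit Arguments. Unset Strict Implicit. Unset Printing Implicit Defensive.
Import GRing.Theory.
Local Open Scope ring_scope.

Section Defs.
Variables (k : fieldType) (A : algType k).

(* d is a derivation: Leibniz rule (k-linearity is carried by the type) *)
Definition leibniz (d : A -> A) : Prop :=
  forall a b : A, d (a * b) = d a * b + a * d b.

Definition locally_nilpotent (d : A -> A) : Prop :=
  forall a : A, exists n : nat, (0 < n)%N /\ iter n d a = 0.

Definition kerd (d : A -> A) : A -> Prop := fun a => d a = 0.

(* The subring S (given as a subset of A containing 1, closed under ring
   operations) is a left Ore domain: nonzero ring without zero divisors
   such that S a ∩ S b <> 0 for nonzero a, b in S. *)
Definition left_ore_domain (S : A -> Prop) : Prop :=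
  [/\ (1 : A) != 0,
      (forall a b, S a -> S b -> a * b = 0 -> a = 0 \/ b = 0) &
      (forall a b, S a -> S b -> a != 0 -> b != 0 ->
         exists s t, [/\ S s, S t, s * a = t * b & s * a != 0])].

(* Elements of A[z;d] are written sum_i a_i z^i, represented by the
   coefficient list p = [:: a_0; a_1; ...]; their action on A is
   (sum_i a_i z^i) . x = sum_i a_i d^i(x). *)
Definition dop_act (d : A -> A) (p : seq A) (x : A) : A :=
  \sum_(i < size p) p`_i * iter i d x.

Definition is_submod (d : A -> A) (N : A -> Prop) : Prop :=
  [/\ N 0,
      (forall x y, N x -> N y -> N (x - y)) &
      (forall p x, N x -> N (dop_act d p x))].

Definition nonzero_set (N : A -> Prop) : Prop := exists y, N y /\ y != 0.

Definition dmod_hom (d : A -> A) (f : A -> A) : Prop :=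
  (forall x y, f (x + y) = f x + f y) /\
  (forall p x, f (dop_act d p x) = dop_act d p (f x)).

Definition embeds_into_sub (d : A -> A) (N : A -> Prop) : Prop :=
  exists f : A -> A, [/\ dmod_hom d f, injective f & forall x, N (f x)].

(* A map A -> A/N is represented by
   a lift f : A -> A (x |-> class of f x); it is a module homomorphism iff
   the defects below lie in N, and injective iff f x in N forces x = 0. *)
Definition embeds_into_factor (d : A -> A) (N : A -> Prop) : Prop :=
  exists f : A -> A,
    [/\ (forall x y, N (f (x + y) - (f x + f y))),
        (forall p x, N (f (dop_act d p x) - dop_act d p (f x))) &
        (forall x, N (f x) -> x = 0)].

Definition critically_compressible (d : A -> A) : Prop :=
  [/\ (1 : A) != 0,
      (forall N, is_submod d N -> nonzero_set N -> embeds_into_sub d N) &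
      (forall N, is_submod d N -> nonzero_set N -> ~ embeds_into_factor d N)].

End Defs.

(* Main.v *)
Require Import Defs.
From HB Require Import structures.
From mathcomp Require Import all_boot all_order all_algebra.
From Stdlib Require Import Classical ClassicalEpsilon Lia.
Import GRing.Theory.
Local Open Scope ring_scope.

Section Helpers.
Local Set Implicit Arguments. Local Unset Strict Implicit.
Variables (k : fieldType) (A : algType k) (d : {linear A -> A}).
Hypothesis lb : leibniz d.

Local Notation D n a := (iter n d a).

Lemma D0 n : D n 0 = 0.
Proof. by elim: n => //= n ->; rewrite raddf0. Qed.

Lemma DD n a b : D n (a + b) = D n a + D n b.
Proof. by elim: n => //= n ->; rewrite raddfD. Qed.

Lemma DB n a b : D n (a - b) = D n a - D n b.
Proof. by elim: n => //= n ->; rewrite raddfB. Qed.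

Lemma DZ n (c : k) a : D n (c *: a) = c *: D n a.
Proof. by elim: n => //= n ->; rewrite linearZ. Qed.

Lemma Dmono n m a : D n a = 0 -> D (m + n) a = 0.
Proof. by move=> H; rewrite iterD H D0. Qed.

Lemma d1 : d 1 = 0.
Proof.
have := lb 1 1; rewrite !mulr1 !mul1r => H.
by apply: (addrI (d 1)); rewrite addr0 -H.
Qed.

Lemma Dconst_r n a c : d c = 0 -> D n (a * c) = D n a * c.
Proof.
move=> hc; elim: n => //= n ->.
by rewrite lb hc mulr0 addr0.
Qed.

Lemma Dconst_l n a c : d c = 0 -> D n (c * a) = c * D n a.
Proof.
move=> hc; elim: n => //= n ->.
by rewrite lb hc mul0r add0r.
Qed.

Lemma KL n : forall p q a b, (p + q = n)%N -> D p.+1 a = 0 -> D q.+1 b = 0 ->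
  D n.+1 (a * b) = 0 /\ D n (a * b) = ('C(n, p))%:R *: (D p a * D q b).
Proof.
elim: n => [|n IH] p q a b.
  case: p => // ; case: q => // _ ha hb.
  have ha0 : d a = 0 := ha. have hb0 : d b = 0 := hb.
  by rewrite [D 1 _]/= lb ha0 hb0 mul0r mulr0 addr0 bin0 scale1r.
case: p => [|p].
  move=> hpq ha hb; have ha0 : d a = 0 := ha.
  rewrite add0n in hpq; subst q.
  by rewrite !Dconst_l // hb mulr0 bin0 scale1r.
case: q => [|q].
  move=> hpq ha hb; have hb0 : d b = 0 := hb.
  rewrite addn0 in hpq; case: hpq => hpq; subst p.
  by rewrite !Dconst_r // ha mul0r binn scale1r.
move=> hpq ha hb.
have e1 : (p + q.+1 = n)%N by move: hpq; rewrite addSn => -[].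
have e2 : (p.+1 + q = n)%N by rewrite addSn -addnS.
have ha' : D p.+1 (d a) = 0 by rewrite -iterSr.
have hb' : D q.+1 (d b) = 0 by rewrite -iterSr.
have [Z1 E1] := IH p q.+1 (d a) b e1 ha' hb.
have [Z2 E2] := IH p.+1 q a (d b) e2 ha hb'.
rewrite [D n.+2 _]iterSr [D n.+1 (a * b)]iterSr lb !DD Z1 Z2 addr0; split => //.
rewrite E1 E2 -[D p (d a)]iterSr -[D q (d b)]iterSr binS natrD scalerDl addrC; done.
Qed.

Lemma Dx x : d x = 1 -> forall j, D j (x ^+ j) = (j`!)%:R *: 1 /\ D j.+1 (x ^+ j) = 0.
Proof.
move=> hx; elim=> [|j [E Z]].
  by rewrite expr0 /= d1 fact0 scale1r.
have hx2 : D 1.+1 x = 0 by rewrite /= hx d1.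
have [Z' E'] := @KL (j + 1) j 1 (x ^+ j) x erefl Z hx2.
rewrite exprSr -addn1; split => //.
rewrite E' E /= hx mulr1 scalerA -natrM addn1 binSn factS //.
Qed.

Lemma exact_deg a n : a != 0 -> D n a = 0 -> exists p, D p a != 0 /\ D p.+1 a = 0.
Proof.
move=> a0; elim: n => [|n IH] H; first by move: a0; rewrite -[a]/(iter 0 d a) H eqxx.
case: (eqVneq (D n a) 0) => [/IH //|hn]; by exists n.
Qed.

Lemma exact_deg2 s t n : (s != 0) || (t != 0) -> D n s = 0 -> D n t = 0 ->
  exists M, ((D M s != 0) || (D M t != 0)) /\ D M.+1 s = 0 /\ D M.+1 t = 0.
Proof.
move=> st0; elim: n => [|n IH] Hs Ht; first by move: st0; rewrite -[s]/(iter 0 d s) -[t]/(iter 0 d t) Hs Ht eqxx.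
case: (eqVneq (D n s) 0) => [hs|hs]; last by exists n; rewrite hs.
case: (eqVneq (D n t) 0) => [ht|ht]; first exact: IH.
by exists n; rewrite ht orbT.
Qed.

Lemma deg_lt a n p : D p a != 0 -> D n a = 0 -> (p < n)%N.
Proof.
move=> hp hn; rewrite ltnNge; apply/negP => le.
by move: hp; rewrite -(subnK le) Dmono ?eqxx.
Qed.

Lemma dop_act1 a z : dop_act d [:: a] z = a * z.
Proof. by rewrite /dop_act big_ord1. Qed.

Lemma dop_actd z : dop_act d [:: 0; 1] z = d z.
Proof. by rewrite /dop_act !big_ord_recr big_ord0 /= mul0r !add0r mul1r. Qed.

Lemma dop_act_mulc p z c : d c = 0 -> dop_act d p (z * c) = dop_act d p z * c.
Proof.
move=> hc; rewrite /dop_act mulr_suml; apply: eq_bigr => i _.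
by rewrite Dconst_r // mulrA.
Qed.

Lemma dop_act0 p : dop_act d p 0 = 0.
Proof. by rewrite /dop_act big1 // => i _; rewrite D0 mulr0. Qed.

Lemma sub_mul N a y : is_submod d N -> N y -> N (a * y).
Proof. by case=> _ _ H /(H [:: a]); rewrite dop_act1. Qed.

Lemma sub_d N y : is_submod d N -> N y -> N (d y).
Proof. by case=> _ _ H /(H [:: 0; 1]); rewrite dop_actd. Qed.

Lemma sub_D N n y : is_submod d N -> N y -> N (D n y).
Proof. by move=> hN Hy; elim: n => //= n IH; apply: sub_d. Qed.

Lemma sub_add N y z : is_submod d N -> N y -> N z -> N (y + z).
Proof.
case=> N0 NB _ Hy Hz.
have := NB _ _ Hy (NB _ _ N0 Hz); by rewrite sub0r opprK.
Qed.

Lemma hom0 f : dmod_hom d f -> f 0 = 0.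
Proof.
case=> fa _; have := fa 0 0; rewrite addr0 => H.
by apply: (addrI (f 0)); rewrite addr0 -H.
Qed.

End Helpers.

Section Main.
Local Set Implicit Arguments. Local Unset Strict Implicit.
Variables (k : fieldType) (A : algType k) (d : {linear A -> A}).
Hypothesis chr : [pchar k] =i pred0.
Hypothesis lb : leibniz d.
Hypothesis ln : locally_nilpotent d.

Local Notation D n a := (iter n d a).
Local Notation R := (kerd d).

Definition RZ := forall r c : A, d c = 0 -> c != 0 -> r * c = 0 -> r = 0.
Definition domA := forall a b : A, a * b = 0 -> a = 0 \/ b = 0.

Lemma natk n : (0 < n)%N -> (n%:R : k) != 0.
Proof. by move=> n0; rewrite (proj1 (pcharf0P _) chr) -lt0n. Qed.

Lemma RZ_of_dom : domA -> RZ.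
Proof.
move=> dom r c _ c0 /dom [//|c00]; by rewrite c00 eqxx in c0.
Qed.

Lemma RED a b s t : RZ -> d a = 0 -> d b = 0 -> a != 0 -> b != 0 ->
  s * a = t * b -> s * a != 0 ->
  exists s' t', [/\ R s', R t', s' * a = t' * b & s' * a != 0].
Proof.
move=> rz ha hb a0 b0 E sa0.
have s0 : s != 0 by apply: contraNneq sa0 => ->; rewrite mul0r.
have [ns [_ Hs]] := ln s; have [nt [_ Ht]] := ln t.
have Hs' : D (nt + ns) s = 0 by apply: Dmono.
have Ht' : D (nt + ns) t = 0 by rewrite addnC; apply: Dmono.
have [M [nz [Zs Zt]]] := exact_deg2 (introT orP (or_introl s0) : (s != 0) || (t != 0)) Hs' Ht'.
have E' : D M s * a = D M t * b by rewrite -!Dconst_r // E.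
exists (D M s), (D M t); split => //.
case/orP: nz => [nzs|nzt].
  apply/eqP => /(rz _ _ ha a0) h; by rewrite h eqxx in nzs.
rewrite E'; apply/eqP => /(rz _ _ hb b0) h; by rewrite h eqxx in nzt.
Qed.

Lemma domA_of_R : (forall a b, R a -> R b -> a * b = 0 -> a = 0 \/ b = 0) -> domA.
Proof.
move=> domR a b ab.
case: (eqVneq a 0) => [->|a0]; first by left.
case: (eqVneq b 0) => [->|b0]; first by right.
exfalso.
have [na [_ Ha]] := ln a; have [nb [_ Hb]] := ln b.
have [p [pa pa1]] := exact_deg a0 Ha.
have [q [qb qb1]] := exact_deg b0 Hb.
have [_ E] := @KL _ _ _ lb (p + q) p q a b erefl pa1 qb1.
move: E; rewrite ab D0 => /esym/eqP.
rewrite scaler_eq0 (negbTE (natk _)) /=; last by rewrite bin_gt0 leq_addr.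
move/eqP/(domR _ _ pa1 qb1) => [h|h]; [by move/eqP: pa; apply | by move/eqP: qb; apply].
Qed.

Section OreA.
Hypothesis dom : domA.
Hypothesis oreR : forall a b, R a -> R b -> a != 0 -> b != 0 ->
  exists s t, [/\ R s, R t, s * a = t * b & s * a != 0].
Variable x : A.
Hypothesis hx : d x = 1.

Definition OreP N := forall a b n1 n2, (n1 + n2 <= N)%N -> a != 0 -> b != 0 ->
  D n1 a = 0 -> D n2 b = 0 -> exists s t, s * a = t * b /\ s * a != 0.

Lemma mulnz (a b : A) : a != 0 -> b != 0 -> a * b != 0.
Proof. by move=> a0 b0; apply/eqP => /dom [] /eqP; apply/negP. Qed.

Lemma ore_step N : OreP N -> forall (a b : A) p q n2, a != 0 -> b != 0 ->
  D p a != 0 -> D p.+1 a = 0 -> D q b != 0 -> D q.+1 b = 0 -> (q <= p)%N ->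
  (p + n2 <= N)%N -> D n2 b = 0 -> exists s t, s * a = t * b /\ s * a != 0.
Proof.
move=> IH a b p q n2 a0 b0 pa pa1 qb qb1 qp le hn2.
set j := (p - q)%N.
have pj : p = (j + q)%N by rewrite subnK.
have [Ey Zy] := Dx lb hx j.
have [Zyb Eyb] := @KL _ _ _ lb (j + q) j q (x ^+ j) b erefl Zy qb1.
rewrite -pj in Zyb Eyb.
have [u [v' [Ru Rv' huv uv0]]] := oreR pa1 qb1 pa qb.
set c : k := ('C(p, j) * j`!)%:R.
have c0 : c != 0 by apply: natk; rewrite muln_gt0 bin_gt0 pj leq_addr fact_gt0.
set v := c^-1 *: v'.
have Rv : R v by rewrite /kerd /v linearZ /=; rewrite Rv' scaler0.
set a' := u * a - v * (x ^+ j * b).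
have Da' : D p a' = 0.
  rewrite /a' DB Dconst_l // Dconst_l // Eyb Ey.
  rewrite mulr_algl scalerA -natrM -/c -scalerAr /v -scalerAl scalerA.
  by rewrite mulfV // scale1r huv subrr.
have u0 : u != 0 by apply: contraNneq uv0 => ->; rewrite mul0r.
have ua : u * a = a' + v * (x ^+ j * b) by rewrite /a' subrK.
case: (eqVneq a' 0) => [a'0|a'0].
  exists u, (v * x ^+ j); split; last exact: mulnz.
  by rewrite ua a'0 add0r mulrA.
have le' : (p + n2 <= N)%N := le.
have [s' [t' [E' nz']]] := IH a' b p n2 le' a'0 b0 Da' hn2.
have s'0 : s' != 0 by apply: contraNneq nz' => ->; rewrite mul0r.
exists (s' * u), (t' + s' * (v * x ^+ j)); split; last by apply: mulnz => //; apply: mulnz.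
by rewrite -mulrA ua mulrDr E' mulrDl !mulrA.
Qed.

Lemma ore_main N : OreP N.
Proof.
elim: N => [|N IH] a b n1 n2 le a0 b0 H1 H2.
  move: le; rewrite leqn0 addn_eq0 => /andP [/eqP e _]; subst n1.
  by move: a0; rewrite -[a]/(iter 0 d a) H1 eqxx.
have [p [pa pa1]] := exact_deg a0 H1.
have [q [qb qb1]] := exact_deg b0 H2.
have lp := deg_lt pa H1; have lq := deg_lt qb H2.
case: (leqP q p) => qp.
  apply: (ore_step IH) a0 b0 pa pa1 qb qb1 qp _ H2.
  move/ltP: lp => lp'; move/ltP: lq => lq'; move/leP: le => le'; apply/leP; move: lp' lq' le'; rewrite -?plusE; lia.
have le2 : (q + n1 <= N)%N.
  move/ltP: lp => lp'; move/ltP: lq => lq'; move/leP: le => le'; apply/leP; move: lp' lq' le'; rewrite -?plusE; lia.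
have [s [t [E nz]]] := ore_step IH b0 a0 qb qb1 pa pa1 (ltnW qp) le2 H1.
by exists t, s; split => //; rewrite -E.
Qed.

Lemma ore_A (a b : A) : a != 0 -> b != 0 -> exists s t, s * a = t * b /\ s * a != 0.
Proof.
move=> a0 b0; have [n1 [_ H1]] := ln a; have [n2 [_ H2]] := ln b.
exact: (@ore_main (n1 + n2) a b n1 n2).
Qed.

End OreA.


Lemma a_to_b (x : A) : d x = 1 -> left_ore_domain R -> left_ore_domain (fun _ : A => True).
Proof.
move=> hx [one domR oreR]; have dom := domA_of_R domR.
split => // [a b _ _ /dom //| a b _ _ a0 b0].
have [s [t [E nz]]] := ore_A dom oreR hx a0 b0; by exists s, t.
Qed.

Lemma b_to_a : left_ore_domain (fun _ : A => True) -> left_ore_domain R.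
Proof.
move=> [one dom ore]; split => // [a b _ _|a b ha hb a0 b0]; first exact: dom.
have [s [t [_ _ E nz]]] := ore a b I I a0 b0.
exact: RED (RZ_of_dom (fun a b => dom a b I I)) ha hb a0 b0 E nz.
Qed.

Lemma b_to_c : left_ore_domain (fun _ : A => True) -> critically_compressible d.
Proof.
case=> one dom ore; split => // N hN [y [Ny y0]].
  have [n [_ Hn]] := ln y. have [m [ym ym1]] := exact_deg y0 Hn.
  have Nc : N (D m y) := @sub_D _ _ _ N m y hN Ny.
  exists (fun z => z * D m y); split.
  - split => [z w|p z]; first by rewrite mulrDl.
    by rewrite dop_act_mulc.
  - move=> z w /eqP; rewrite -subr_eq0 -mulrBl => /eqP /(dom _ _ I I) [/eqP|h].
      by rewrite subr_eq0 => /eqP.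
    by move/eqP: ym.
  - by move=> z; exact: (@sub_mul _ _ _ N z _ hN Nc).
move=> [f [fa fp finj]].
have [a [a0 Nac]] : exists a, a != 0 /\ N (a * f 1).
  case: (eqVneq (f 1) 0) => [->|c0].
    by exists 1; split => //; rewrite mulr0; case: hN.
  have [s [t [_ _ E nz]]] := ore (f 1) y I I c0 y0.
  exists s; split; first by apply/eqP => s0; move: nz; rewrite s0 mul0r eqxx.
  by rewrite E; exact: (@sub_mul _ _ _ N t y hN Ny).
apply: (negP a0); apply/eqP; apply: finj.
have := fp [:: a] 1; rewrite !dop_act1 mulr1 => H.
by have := sub_add hN H Nac; rewrite subrK.
Qed.

Lemma subAc c : d c = 0 -> is_submod d (fun z => exists w, z = w * c).
Proof.
move=> hc; split.
- by exists 0; rewrite mul0r.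
- by move=> _ _ [w ->] [w' ->]; exists (w - w'); rewrite mulrBl.
- by move=> p _ [w ->]; exists (dop_act d p w); rewrite dop_act_mulc.
Qed.

Lemma c_to_a : critically_compressible d -> left_ore_domain R.
Proof.
case=> one comp crit.
have rz : RZ.
  move=> r c hc c0 rc; case: (eqVneq r 0) => // r0; exfalso.
  have [g [[ga gp] ginj gN]] := comp _ (subAc hc)
     (ex_intro _ c (conj (ex_intro _ 1 (esym (mul1r c))) c0)).
  pose L := fun z => z * c = 0.
  have hL : is_submod d L.
    split; first by rewrite /L mul0r.
      by move=> z w; rewrite /L mulrBl => -> ->; rewrite subrr.
    by move=> p z; rewrite /L -dop_act_mulc // => ->; apply: dop_act0.
  apply: (crit L hL (ex_intro _ r (conj rc r0))).
  pose h z := proj1_sig (constructive_indefinite_description _ (gN z)).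
  have hh : forall z, g z = h z * c.
    by move=> z; rewrite /h; case: (constructive_indefinite_description _ _).
  exists h; split.
  - by move=> z w; rewrite /L mulrBl mulrDl -!hh ga subrr.
  - by move=> p z; rewrite /L mulrBl -dop_act_mulc // -!hh gp subrr.
  - move=> z; rewrite /L -hh => gz0; apply: ginj.
    by rewrite gz0 (hom0 (conj ga gp)).
split => //.
  move=> a b _ hb ab; case: (eqVneq b 0) => [->|b0]; first by right.
  by left; apply: (rz a b hb b0 ab).
move=> a b ha hb a0 b0.
have : exists s t, s * a = t * b /\ s * a != 0.
  apply: NNPP => hne.
  apply: (crit _ (subAc ha) (ex_intro _ a (conj (ex_intro _ 1 (esym (mul1r a))) a0))).
  have [g [[ga gp] ginj gN]] := comp _ (subAc hb)
     (ex_intro _ b (conj (ex_intro _ 1 (esym (mul1r b))) b0)).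
  exists g; split.
  - by move=> z w; rewrite ga subrr; exists 0; rewrite mul0r.
  - by move=> p z; rewrite gp subrr; exists 0; rewrite mul0r.
  - move=> z [s Es]; have [t Et] := gN z.
    case: (eqVneq (g z) 0) => [gz0|gz0].
      by apply: ginj; rewrite gz0 (hom0 (conj ga gp)).
    by exfalso; apply: hne; exists s, t; rewrite -Es -Et.
move=> [s [t [E nz]]].
have [s' [t' [Rs Rt E' nz']]] := RED rz ha hb a0 b0 E nz.
by exists s', t'.
Qed.

End Main.

Theorem proposition3p12 (k : fieldType) (A : algType k) (d : {linear A -> A}) :
  [pchar k] =i pred0 ->
  leibniz d ->
  locally_nilpotent d ->
  (exists x : A, d x = 1) ->
  (left_ore_domain (kerd d) <-> left_ore_domain (fun _ : A => True)) /\
  (left_ore_domain (fun _ : A => True) <-> critically_compressible d).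
Proof.
move=> chr lb ln [x hx].
have ab := a_to_b chr lb ln hx.
have ba := b_to_a lb ln.
have bc := b_to_c lb ln.
have ca := c_to_a lb ln.
split; split; [exact: ab | exact: ba | exact: bc | ].
move=> hc; exact: (ab (ca hc)).
Qed.
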